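(* Let $\Sigma$ be an alphabet with $n$ letters, let $\ell\notin\Sigma$, let $P=p_1p_2\cdots p_n$ be a permutation of $\Sigma$, and let $\pi:\ \pi_1<\pi_2<\cdots<\pi_{n+1}$ be a total ordering of $\Sigma\cup\{\ell\}$ with $\pi_1\neq \ell$. Define a sequence $\beta_1,\beta_2,\dots$ of elements of $\Sigma\cup\{\ell\}$ by $\beta_1=\pi_1$ and, whenever $\beta_j=p_x$ for some $x$ with $p_x<_\pi \min_\pi\{p_n,\ell\}$, by $$\beta_{j+1}=\min_\pi\{p_{x+1},\dots,p_n,\ell\};$$ the sequence stops at the first index $w$ with $\beta_w=\min_\pi\{p_n,\ell\}$. For $1\le j\le w$ let $S_j$ denote the lineage taxon string of the taxon $\beta_j$ in the line tree $T(P)$ under $\pi$. Then every $S_j$ is nonempty, and $$P = S_1[1,|S_1|-1]\,\beta_1\,S_2[1,|S_2|-1]\,\beta_2\cdots S_{w-1}[1,|S_{w-1}|-1]\,\beta_{w-1}\,S'_w,$$ where $$S'_w=\begin{cases} S_w & \text{if } \beta_w=\ell,\\ S_w[1,|S_w|-1]\,\beta_w & \text{if } \beta_w\neq\ell,\end{cases}$$ $S[1,|S|-1]$ denotes the string obtained from a nonempty string $S$ by deleting its last letter, and juxtaposition denotes concatenation.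
   Context: Line tree $T(P)$: for a permutation $P=p_1\cdots p_n$ of $\Sigma$ and a letter $\ell\notin\Sigma$, $T(P)$ is the rooted tree with leaf set $\Sigma\cup\{\ell\}$, internal nodes $r,v_1,\dots,v_n$, and directed edges $(r,v_1)$, $(v_i,v_{i+1})$ and $(v_i,p_i)$ for $1\le i\le n-1$, and $(v_n,p_n)$, $(v_n,\ell)$. The root $r$ has outdegree 1. Lineage taxon string (LTS): let $T$ be a rooted binary tree whose root has outdegree 1 and whose leaves are labeled bijectively by a taxon set $X$, and let $\pi$ be a total ordering of $X$. For a node $u$, $\min_\pi(u)$ is the $\pi$-smallest taxon among the leaves below or equal to $u$. Label the root with the $\pi$-smallest taxon of $X$, and label each non-root internal node $u$ (which has two children $u',u''$) with the $\pi$-larger of $\min_\pi(u')$ and $\min_\pi(u'')$. Each taxon $f$ is then the label of exactly one internal node $w_f$, and the leaf $f$ lies below $w_f$. The LTS of $f$ in $T$ under $\pi$ is the sequence of labels of the nodes strictly between $w_f$ and the leaf $f$ on the directed path from $w_f$ to $f$, listed in order from $w_f$ towards $f$ (it may be empty). For example, for $P=edabc$ and the ordering $a<b<c<d<e<\ell$, the LTSs of $a,b,c$ in $T(P)$ are $edb$, $c$, $\ell$, and those of $d,e,\ell$ are empty. *)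

(* Defs.v *)
From mathcomp Require Import all_boot.
Set Implicit Arguments. Unset Strict Implicit. Unset Printing Implicit Defensive.

Section LTS.
Variable T : eqType.

(** A total ordering pi of the taxa, given as the list pi_1 < pi_2 < ... *)
Definition ltpi (pi : seq T) (x y : T) : bool := index x pi < index y pi.
Definition minpi2 (pi : seq T) (a b : T) : T := if index a pi <= index b pi then a else b.
Definition maxpi2 (pi : seq T) (a b : T) : T := if index a pi <= index b pi then b else a.
Definition minpi (pi : seq T) (a : T) (s : seq T) : T := foldl (minpi2 pi) a s.

(** Rooted binary trees with leaves labelled by taxa.  A rooted tree whose
    root r has outdegree 1 is represented by the binary tree hanging below r. *)
Inductive btree : Type := Leaf of T | Node of btree & btree.

Fixpoint leaves (t : btree) : seq T :=
  match t with Leaf a => [:: a] | Node l r => leaves l ++ leaves r end.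

Fixpoint tmin (pi : seq T) (t : btree) : T :=
  match t with Leaf a => a | Node l r => minpi2 pi (tmin pi l) (tmin pi r) end.

Definition nlabel (pi : seq T) (l r : btree) : T := maxpi2 pi (tmin pi l) (tmin pi r).

Fixpoint path_labels (pi : seq T) (t : btree) (f : T) : seq T :=
  match t with
  | Leaf _ => [::]
  | Node l r => nlabel pi l r ::
      (if f \in leaves l then path_labels pi l f else path_labels pi r f)
  end.

(** Lineage taxon string of f in the planted tree (root r above t) under pi:
    the root r is labelled with the pi-smallest taxon (= tmin pi t); w_f is the
    node labelled f on the path from r to the leaf f; the LTS is the list of the
    labels of the nodes strictly between w_f and the leaf f. *)
Definition lts (pi : seq T) (t : btree) (f : T) : seq T :=
  let p := tmin pi t :: path_labels pi t f in drop (index f p).+1 p.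

Fixpoint line_tree (l : T) (P : seq T) : btree :=
  match P with
  | [::] => Leaf l
  | [:: p] => Node (Leaf p) (Leaf l)
  | p :: P' => Node (Leaf p) (line_tree l P')
  end.

(** The sequence beta_1, beta_2, ..., beta_w: starting from cur, with
    m = min_pi{p_n, l}; if cur = p_x <_pi m, the next element is
    min_pi{p_{x+1},...,p_n,l}; stop at the first element equal to m.
    (fuel only bounds the recursion; size P + 1 suffices.) *)
Fixpoint betas (pi P : seq T) (l m : T) (fuel : nat) (cur : T) : seq T :=
  match fuel with
  | 0 => [:: cur]
  | k.+1 =>
      if cur == m then [:: cur]
      else cur :: betas pi P l m k (minpi pi l (drop (index cur P).+1 P))
  end.

Definition droplast (s : seq T) : seq T := take (size s).-1 s.

End LTS.

(* Main.v *)
Require Import Defs.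
From mathcomp Require Import all_boot zify.
Set Implicit Arguments. Unset Strict Implicit. Unset Printing Implicit Defensive.

Lemma split_mem (T : eqType) (x : T) (s : seq T) : x \in s -> exists s1 s2, s = s1 ++ x :: s2.
Proof. by case/splitPr=> s1 s2; exists s1, s2. Qed.

Lemma idx_inj (T : eqType) (pi : seq T) x y :
  x \in pi -> y \in pi -> index x pi = index y pi -> x = y.
Proof. by move=> hx hy e; rewrite -(nth_index x hx) -(nth_index x hy) e. Qed.

Lemma idx_lt (T : eqType) (pi : seq T) x y : x \in pi -> y \in pi -> x != y ->
  index x pi <= index y pi -> index x pi < index y pi.
Proof.
move=> hx hy ne le; rewrite ltn_neqAle le andbT; apply/negP=> /eqP e.
by rewrite (idx_inj hx hy e) eqxx in ne.
Qed.

Lemma minpi2_mem (T : eqType) (pi : seq T) a b : minpi2 pi a b \in [:: a; b].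
Proof. by rewrite /minpi2; case: ifP => _; rewrite !inE eqxx ?orbT. Qed.

Lemma minpi2_le (T : eqType) (pi : seq T) a b :
  index (minpi2 pi a b) pi <= index a pi /\ index (minpi2 pi a b) pi <= index b pi.
Proof. rewrite /minpi2; case: (leqP (index a pi) (index b pi)) => h /=; split => //; exact: ltnW. Qed.

Lemma minpi_mem (T : eqType) (pi : seq T) a s : minpi pi a s \in a :: s.
Proof.
elim: s a => [|x s IH] a; first by rewrite /minpi /= inE.
have -> : minpi pi a (x :: s) = minpi pi (minpi2 pi a x) s by [].
have := IH (minpi2 pi a x); rewrite inE => /orP[/eqP->|h]; last by rewrite !inE h !orbT.
by have := minpi2_mem pi a x; rewrite !inE => /orP[/eqP->|/eqP->]; rewrite eqxx ?orbT.
Qed.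

Lemma minpi_le (T: eqType) (pi : seq T) a s y :
  y \in a :: s -> index (minpi pi a s) pi <= index y pi.
Proof.
elim: s a y => [|x s IH] a y; first by rewrite /minpi /= inE => /eqP->.
have -> : minpi pi a (x :: s) = minpi pi (minpi2 pi a x) s by [].
rewrite inE => /orP[/eqP->|].
  exact: leq_trans (IH _ _ (mem_head _ _)) (minpi2_le pi a x).1.
rewrite inE => /orP[/eqP->|h].
  exact: leq_trans (IH _ _ (mem_head _ _)) (minpi2_le pi a x).2.
by apply: IH; rewrite inE h orbT.
Qed.

Lemma line_tree_cons (T : eqType) (l q : T) Q : line_tree l (q :: Q) = Node (Leaf q) (line_tree l Q).
Proof. by case: Q. Qed.

Lemma tmin_mem (T : eqType) pi (l : T) Q : tmin pi (line_tree l Q) \in l :: Q.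
Proof.
elim: Q => [|q Q IH]; first by rewrite /= inE.
rewrite line_tree_cons /=.
have := minpi2_mem pi q (tmin pi (line_tree l Q)); rewrite !inE => /orP[/eqP->|/eqP->].
  by rewrite eqxx orbT.
by move: IH; rewrite inE => /orP[->//|h]; rewrite h !orbT.
Qed.

Lemma tmin_le (T : eqType) pi (l : T) Q y :
  y \in l :: Q -> index (tmin pi (line_tree l Q)) pi <= index y pi.
Proof.
elim: Q y => [|q Q IH] y; first by rewrite /= inE => /eqP->.
rewrite line_tree_cons /= !inE => /orP[/eqP->|/orP[/eqP->|h]].
- exact: leq_trans (minpi2_le pi _ _).2 (IH l (mem_head _ _)).
- exact: (minpi2_le pi _ _).1.
- by apply: leq_trans (minpi2_le pi _ _).2 (IH _ _); rewrite inE h orbT.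
Qed.

Lemma tmin_minpi (T : eqType) pi (l : T) Q :
  (forall x, x \in l :: Q -> x \in pi) -> tmin pi (line_tree l Q) = minpi pi l Q.
Proof.
move=> h; apply: (idx_inj (h _ (tmin_mem _ _ _)) (h _ (minpi_mem _ _ _))).
by apply/eqP; rewrite eqn_leq tmin_le ?minpi_mem //= minpi_le // tmin_mem.
Qed.

Fixpoint labx (T : eqType) (pi : seq T) (l : T) (Q1 Q2 : seq T) : seq T :=
  match Q1 with
  | [::] => [::]
  | q :: Q1' => nlabel pi (Leaf q) (line_tree l (Q1' ++ Q2)) :: labx pi l Q1' Q2
  end.

Lemma PL1 (T : eqType) pi (l f : T) Q1 Q2 : f \notin Q1 ->
  path_labels pi (line_tree l (Q1 ++ Q2)) f = labx pi l Q1 Q2 ++ path_labels pi (line_tree l Q2) f.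
Proof.
elim: Q1 => [|q Q1 IH]; first by [].
rewrite inE negb_or => /andP[hq hf].
by rewrite cat_cons line_tree_cons /= inE (negbTE hq) IH.
Qed.

Lemma labx_cat (T : eqType) pi (l : T) X Y Z :
  labx pi l (X ++ Y) Z = labx pi l X (Y ++ Z) ++ labx pi l Y Z.
Proof. by elim: X => [|x X IH] //=; rewrite IH catA. Qed.

Lemma labx_id (T : eqType) pi (l : T) Q1 Q2 z : z \in l :: Q2 ->
  (forall q, q \in Q1 -> index z pi < index q pi) -> labx pi l Q1 Q2 = Q1.
Proof.
move=> hz; elim: Q1 => [|q Q1 IH] hq //=.
rewrite IH; last by move=> x hx; apply: hq; rewrite inE hx orbT.
rewrite /nlabel /maxpi2 /=.
have h1 : index (tmin pi (line_tree l (Q1 ++ Q2))) pi <= index z pi.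
  by apply: tmin_le; move: hz; rewrite !inE mem_cat => /orP[->|->]; rewrite ?orbT.
have h2 := hq q (mem_head _ _).
by rewrite leqNgt (leq_ltn_trans h1 h2).
Qed.

Lemma drop_idx (T : eqType) (x : T) s1 s2 : x \notin s1 ->
  drop (index x (s1 ++ x :: s2)).+1 (s1 ++ x :: s2) = s2.
Proof.
move=> hx; rewrite index_cat (negbTE hx) /= eqxx addn0 drop_cat ltnNge leqnSn /=.
by rewrite subSn // subnn /= drop0.
Qed.

Lemma droplast_cat1 (T : eqType) (s : seq T) x : droplast (s ++ [:: x]) = s.
Proof. by rewrite /droplast size_cat addn1 /= take_size_cat. Qed.

Lemma droplast_cons (T : eqType) (a : T) s : s != [::] -> droplast (a :: s) = a :: droplast s.
Proof. by case: s. Qed.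

Lemma last_in (T : eqType) (x : T) s : s != [::] -> last x s \in s.
Proof. by case: s => // y s _; exact: (mem_last y s). Qed.

Lemma betas_cons (T : eqType) pi P (l m : T) fuel cur :
  exists x s, betas pi P l m fuel cur = x :: s.
Proof. by case: fuel => [|k] /=; [|case: ifP]; eexists; eexists. Qed.

Lemma lts_at (T : eqType) pi (l : T) P pre Q A b :
  P = pre ++ Q -> tmin pi (line_tree l P) :: labx pi l pre Q = rcons A b ->
  b \notin pre -> b \notin A ->
  lts pi (line_tree l P) b = path_labels pi (line_tree l Q) b.
Proof.
move=> hP hK hb hA.
have e : path_labels pi (line_tree l P) b = labx pi l pre Q ++ path_labels pi (line_tree l Q) b.
  by rewrite hP PL1.
by rewrite /lts e -cat_cons hK cat_rcons drop_idx.
Qed.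

Lemma main (T : eqType) (pi P : seq T) (l : T)
  (hu : uniq (l :: P)) (hpi : forall x, x \in l :: P -> x \in pi) :
  forall fuel pre Q A, P = pre ++ Q -> Q != [::] -> size Q <= fuel ->
  tmin pi (line_tree l P) :: labx pi l pre Q = rcons A (minpi pi l Q) ->
  {subset A <= pre} ->
  let m := minpi2 pi (last l P) l in
  let bs := betas pi P l m fuel (minpi pi l Q) in
  let S := lts pi (line_tree l P) in
  let bw := last l bs in
  let S'w := if bw == l then S bw else droplast (S bw) ++ [:: bw] in
  [/\ last l bs = m,
      all (fun b => S b != [::]) bs
    & Q = flatten [seq droplast (S b) ++ [:: b] | b <- droplast bs] ++ S'w].
Proof.
move=> fuel; elim: fuel => [|k IH] pre Q A hP hQ hsz hK hA.
  by case: (Q) hQ hsz.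
cbv zeta.
set m := minpi2 pi (last l P) l.
set S := lts pi (line_tree l P).
move eb: (minpi pi l Q) => b.
rewrite eb in hK.
have hu' : uniq (l :: pre ++ Q) by rewrite -hP.
move: (hu'); rewrite /= mem_cat negb_or cat_uniq => /andP[/andP[hlpre hlQ] /and3P[_ hdis huQ]].
have dis : forall x, x \in Q -> x \notin pre.
  by move=> x hx; apply/negP => hx'; move/hasPn: hdis => /(_ x hx); rewrite hx'.
have inpi : forall x, x \in l :: Q -> x \in pi.
  move=> x; rewrite inE => /orP[/eqP->|hx]; apply: hpi; first by rewrite inE eqxx.
  by rewrite inE hP mem_cat hx !orbT.
have hbmem : b \in l :: Q by rewrite -eb; apply: minpi_mem.
have hbmin : forall y, y \in l :: Q -> index b pi <= index y pi by rewrite -eb => y; apply: minpi_le.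
have hy : last l P \in Q by rewrite hP last_cat last_in.
have [hbl|hbl] := eqVneq b l.
  have hm : m = l.
    rewrite /m /minpi2; case: leqP => h //.
    have e : index (last l P) pi = index l pi.
      by apply/eqP; rewrite eqn_leq h /= -{1}hbl; apply: hbmin; rewrite inE hy orbT.
    have hyl : last l P \in l :: Q by rewrite inE hy orbT.
    have := idx_inj (inpi _ hyl) (inpi _ (mem_head _ _)) e.
    by move=> el; move: hy; rewrite el (negbTE hlQ).
  have hbpre : b \notin pre by rewrite hbl.
  have hbA : b \notin A by apply/negP => /hA; rewrite hbl (negbTE hlpre).
  have hS : S b = Q.
    rewrite /S (lts_at hP hK hbpre hbA) hbl -{1}[Q]cats0 PL1 // cats0.
    apply: (labx_id (z := l)); first by rewrite inE eqxx.
    move=> q hq; apply: idx_lt; rewrite ?inpi ?inE ?hq ?orbT //.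
      by rewrite eqxx.
      by apply/negP => /eqP el; move: hq; rewrite -el (negbTE hlQ).
    by rewrite -hbl hbmin // inE hq orbT.
  rewrite hm hbl eqxx /= -hbl hS hQ; split => //.
  by rewrite hbl eqxx.
have hbQ : b \in Q by move: hbmem; rewrite inE (negbTE hbl).
have [Q1 [Q2 eQ]] := split_mem hbQ.
move: (huQ); rewrite eQ cat_uniq /= negb_or => /and3P[_ /andP[hbQ1 hdis12] /andP[hbQ2 _]].
have hbpre : b \notin pre by apply: dis.
have hbA : b \notin A by apply/negP => /hA; rewrite (negbTE hbpre).
have inQ2 : forall x, x \in l :: Q2 -> x \in l :: Q.
  by move=> x; rewrite !inE eQ mem_cat inE => /orP[->|->]; rewrite ?orbT.
set b' := minpi pi l Q2.
have hb'mem : b' \in l :: Q2 by apply: minpi_mem.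
have tminQ2 : tmin pi (line_tree l Q2) = b'.
  by apply: tmin_minpi => x hx; apply: inpi; apply: inQ2.
have hlab : nlabel pi (Leaf b) (line_tree l Q2) = b'.
  by rewrite /nlabel /= tminQ2 /maxpi2 hbmin // inQ2.
have hQ1 : labx pi l Q1 (b :: Q2) = Q1.
  apply: (labx_id (z := b)); first by rewrite !inE eqxx orbT.
  move=> q hq; have hqQ : q \in Q by rewrite eQ mem_cat hq.
  apply: idx_lt; rewrite ?inpi ?inE ?hbQ ?hqQ ?orbT //.
    by apply/negP => /eqP el; move: hq; rewrite -el (negbTE hbQ1).
  by rewrite hbmin // inE hqQ orbT.
have hSb : S b = Q1 ++ [:: b'].
  rewrite /S (lts_at hP hK hbpre hbA) eQ PL1 // hQ1 line_tree_cons /= inE eqxx /=.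
  by rewrite hlab.
have [hQ2|hQ2] := eqVneq Q2 [::].
  have hm : m = b.
    have e : last l P = b by rewrite hP eQ hQ2 !last_cat.
    by rewrite /m e /minpi2 hbmin // inE eqxx.
  rewrite hm eqxx /= hSb (negbTE hbl) andbT; split => //.
    by case: (Q1).
  by rewrite droplast_cat1 hQ2.
have hyQ2 : last l P \in Q2.
  by rewrite hP eQ -cat1s catA !last_cat last_in.
have hmb : (b == m) = false.
  apply/negP => /eqP ebm; have := minpi2_mem pi (last l P) l.
  rewrite -/m -ebm !inE => /orP[/eqP ebl|/eqP ebl].
    by move: hyQ2; rewrite -ebl (negbTE hbQ2).
  by rewrite ebl eqxx in hbl.
have hdrop : drop (index b P).+1 P = Q2.
  by rewrite hP eQ catA drop_idx // mem_cat negb_or hbpre hbQ1.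
rewrite hmb hdrop -/b'.
have hsz2 : size Q2 <= k.
  by move: hsz; rewrite eQ size_cat /= addnS ltnS; apply: leq_trans; exact: leq_addl.
have hP' : P = (pre ++ Q1 ++ [:: b]) ++ Q2 by rewrite hP eQ -!catA.
have hK' : tmin pi (line_tree l P) :: labx pi l (pre ++ Q1 ++ [:: b]) Q2 = rcons (rcons A b ++ Q1) (minpi pi l Q2).
  have e1 : (Q1 ++ [:: b]) ++ Q2 = Q by rewrite eQ -catA.
  rewrite labx_cat e1 labx_cat /= hQ1 hlab -/b' -cat_cons hK -cats1.
  by rewrite -cats1 -!catA.
have hA' : {subset rcons A b ++ Q1 <= pre ++ Q1 ++ [:: b]}.
  move=> x; rewrite mem_cat mem_rcons inE !mem_cat inE => /orP[/orP[->|/hA->]|->]; by rewrite ?orbT.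
case: (IH _ _ _ hP' hQ2 hsz2 hK' hA') => hl hall hF.
have [x [s es]] := betas_cons pi P l m k b'.
move: hl hall hF; rewrite -/m -/S -/b' es => hl hall hF.
rewrite (droplast_cons _ (isT : x :: s != [::])) /= hSb droplast_cat1.
split => //.
  move: hall => /= ->; rewrite andbT; by case: (Q1).
rewrite -!catA /=; congr (_ ++ _ :: _).
exact: hF.
Qed.

Theorem proposition1 (T : eqType) (n : nat) (P : seq T) (l : T) (pi : seq T)
  (hP : uniq P) (hn : size P = n) (hl : l \notin P)
  (hpi : perm_eq pi (l :: P)) (hpi1 : head l pi != l) :
  let m := minpi2 pi (last l P) l in
  let bs := betas pi P l m (size P).+1 (head l pi) in
  let S := lts pi (line_tree l P) in
  let bw := last l bs in
  let S'w := if bw == l then S bw else droplast (S bw) ++ [:: bw] in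
  [/\ last l bs = m,
      all (fun b => S b != [::]) bs
    & P = flatten [seq droplast (S b) ++ [:: b] | b <- droplast bs] ++ S'w].
Proof.
have hu : uniq (l :: P) by rewrite /= hl hP.
have hpi' : forall x, x \in l :: P -> x \in pi by move=> x; rewrite (perm_mem hpi).
have [x [s epi]] : exists x s, pi = x :: s.
  by case: (pi) (perm_size hpi) => // x s _; exists x, s.
have hPne : P != [::].
  apply/negP => /eqP eP; move: hpi hpi1; rewrite epi eP => hp.
  have := perm_mem hp x; rewrite !inE eqxx /= => /esym/eqP ->.
  by rewrite eqxx.
have eh : head l pi = minpi pi l P.
  have hx : x \in l :: P by rewrite -(perm_mem hpi) epi mem_head.
  have -> : head l pi = x by rewrite epi.
  apply: (idx_inj (hpi' _ hx) (hpi' _ (minpi_mem _ _ _))).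
  have h0 : index x pi = 0 by rewrite epi /= eqxx.
  have := minpi_le pi hx; rewrite h0 leqn0 => /eqP -> //.
rewrite eh.
have hK0 : tmin pi (line_tree l P) :: labx pi l [::] P = rcons [::] (minpi pi l P).
  by rewrite /= tmin_minpi.
have H := (@main T pi P l hu hpi' (size P).+1 [::] P [::] erefl hPne (leqnSn _) hK0 (fun x (h : x \in [::]) => h)).
exact H.
Qed.
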